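(* Let $s\ge1$, let $P_0(\xi)$ be an $s$-hypoelliptic polynomial on $\mathbb{R}^d$ of order $m$, and let $P_0,P_1,\dots,P_r$ be a basis of the (finite-dimensional) vector space of polynomials weaker than $P_0$. Let $P=\sum_{j=0}^rc_j(x)P_j(D/2\pi)$ with symbol $p(x,\xi)=\sum_{j=0}^rc_j(x)P_j(\xi)$, where $c_j\in G^1_{ap}(\mathbb{R}^d)$ for $j=0,\dots,r$, and assume there exist $\epsilon>0$, $A\ge0$ such that $|p(x,\xi)|\ge\epsilon|P_0(\xi)|$ for all $|\xi|\ge A$ and $x\in\mathbb{R}^d$. Then $P$ has constant strength.
   Context: $D=-i\nabla$, so $P_j(D/2\pi)$ is the constant-coefficient differential operator whose symbol (with respect to $e^{2\pi i x\cdot\xi}$) is $P_j(\xi)$. A polynomial $Q(\xi)$ on $\mathbb{R}^d$ is $s$-hypoelliptic ($1\le s<\infty$) if for some $\rho$ with $0<\rho\le1$, $\rho\ge1/s$, and constants $C>0$, $A\ge0$: $|\partial^\beta Q(\xi)|\le C|Q(\xi)|(1+|\xi|)^{-\rho|\beta|}$ for all $\beta\in\mathbb{N}^d$ and $|\xi|\ge A$. For a polynomial $Q$ set $\tilde Q(\xi)=(\sum_{\alpha\in\mathbb{N}^d}|\partial^\alpha Q(\xi)|^2)^{1/2}$. $Q$ is weaker than $P$ if $\tilde Q(\xi)\le C\tilde P(\xi)$ for all $\xi$ and some $C>0$; $P,Q$ are equally strong if each is weaker than the other. A differential operator with symbol $p(x,\xi)$ has constant strength if $p(x,\cdot)$ and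 $p(y,\cdot)$ are equally strong for all $x,y\in\mathbb{R}^d$. $G^1_{ap}(\mathbb{R}^d)$ is the set of $f\in C^\infty(\mathbb{R}^d)$ such that every $\partial^\alpha f$ is (Bohr) uniformly almost periodic and for some $C>0$, $|\partial^\alpha f(x)|\le C^{1+|\alpha|}\alpha!$ for all $x\in\mathbb{R}^d$, $\alpha\in\mathbb{N}^d$. *)

(* Defs.v *)
From Stdlib Require Import Reals Lra Lia Arith.
From Stdlib Require Fin.
Open Scope R_scope.

Definition Cx := (R * R)%type.
Definition C0 : Cx := (0, 0).
Definition Cadd (a b : Cx) : Cx := (fst a + fst b, snd a + snd b).
Definition Csub (a b : Cx) : Cx := (fst a - fst b, snd a - snd b).
Definition Cmul (a b : Cx) : Cx :=
  (fst a * fst b - snd a * snd b, fst a * snd b + snd a * fst b).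
Definition Cscale (t : R) (a : Cx) : Cx := (t * fst a, t * snd a).
Definition Cnorm (a : Cx) : R := sqrt (fst a ^ 2 + snd a ^ 2).

Definition Rd (d : nat) := Fin.t d -> R.
Definition mindex (d : nat) := Fin.t d -> nat.

Fixpoint fin_fold {A : Type} (op : A -> A -> A) (z : A) (d : nat)
  : (Fin.t d -> A) -> A :=
  match d return (Fin.t d -> A) -> A with
  | O => fun _ => z
  | S d' => fun f => op (f Fin.F1) (fin_fold op z d' (fun i => f (Fin.FS i)))
  end.

Definition fin_sumR d (f : Fin.t d -> R) : R := fin_fold Rplus 0 d f.
Definition fin_prodR d (f : Fin.t d -> R) : R := fin_fold Rmult 1 d f.
Definition fin_sumN d (f : Fin.t d -> nat) : nat := fin_fold Nat.add 0%nat d f.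

Definition vnorm {d} (x : Rd d) : R := sqrt (fin_sumR d (fun i => x i ^ 2)).
Definition vadd {d} (x y : Rd d) : Rd d := fun i => x i + y i.
Definition vsub {d} (x y : Rd d) : Rd d := fun i => x i - y i.
Definition update {d} (x : Rd d) (i : Fin.t d) (t : R) : Rd d :=
  fun j => if Fin.eq_dec i j then t else x j.

Definition mzero {d} : mindex d := fun _ => 0%nat.
Definition madd {d} (a b : mindex d) : mindex d := fun i => (a i + b i)%nat.
Definition munit {d} (i : Fin.t d) : mindex d :=
  fun j => if Fin.eq_dec i j then 1%nat else 0%nat.
Definition mlen {d} (a : mindex d) : nat := fin_sumN d a.
Definition mfact {d} (a : mindex d) : R := fin_prodR d (fun i => INR (fact (a i))).
Definition mono {d} (x : Rd d) (a : mindex d) : R := fin_prodR d (fun i => x i ^ a i).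

Definition mcons {d} (k : nat) (b : mindex d) : mindex (S d) :=
  fun i => Fin.caseS' i (fun _ => nat) k b.

Fixpoint sum_upto {A : Type} (add : A -> A -> A) (N : nat) (f : nat -> A) : A :=
  match N with
  | O => f O
  | S n => add (sum_upto add n f) (f (S n))
  end.

(** Sum over all multi-indices in the box [0,N]^d *)
Fixpoint box_sum {A : Type} (add : A -> A -> A) (d N : nat)
  : (mindex d -> A) -> A :=
  match d return (mindex d -> A) -> A with
  | O => fun F => F (fun i => Fin.case0 (fun _ => nat) i)
  | S d' => fun F => sum_upto add N (fun k => box_sum add d' N (fun b => F (mcons k b)))
  end.

Record mpoly (d : nat) := mkPoly {
  pcoef : mindex d -> Cx;
  pbound : nat;
  pcoef_bound : forall a : mindex d, (exists i, (pbound < a i)%nat) -> pcoef a = C0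
}.
Arguments pcoef {d} _ _.
Arguments pbound {d} _.

Definition peval {d} (Q : mpoly d) (xi : Rd d) : Cx :=
  box_sum Cadd d (pbound Q) (fun a => Cscale (mono xi a) (pcoef Q a)).

Definition pderiv_coef {d} (a : mindex d) (Q : mpoly d) (b : mindex d) : Cx :=
  Cscale (fin_prodR d (fun i => INR (fact (a i + b i)) / INR (fact (b i))))
         (pcoef Q (madd a b)).

Lemma pderiv_coef_bound {d} (a : mindex d) (Q : mpoly d) :
  forall b, (exists i, (pbound Q < b i)%nat) -> pderiv_coef a Q b = C0.
Proof.
  intros b [i Hi]. unfold pderiv_coef.
  rewrite (pcoef_bound d Q (madd a b)).
  - unfold Cscale, C0; simpl; f_equal; ring.
  - exists i. unfold madd. lia.
Qed.

Definition pderiv {d} (a : mindex d) (Q : mpoly d) : mpoly d :=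
  mkPoly d (pderiv_coef a Q) (pbound Q) (pderiv_coef_bound a Q).

(** Q~(xi) = ( sum_a |d^a Q(xi)|^2 )^(1/2); derivatives with some a_i > bound vanish *)
Definition ptilde {d} (Q : mpoly d) (xi : Rd d) : R :=
  sqrt (box_sum Rplus d (pbound Q) (fun a => Cnorm (peval (pderiv a Q) xi) ^ 2)).

Definition weaker {d} (Q P : mpoly d) : Prop :=
  exists K, K > 0 /\ forall xi, ptilde Q xi <= K * ptilde P xi.

Definition equally_strong {d} (P Q : mpoly d) : Prop := weaker P Q /\ weaker Q P.

Definition poly_order {d} (Q : mpoly d) (m : nat) : Prop :=
  (exists a, mlen a = m /\ pcoef Q a <> C0) /\
  (forall a, pcoef Q a <> C0 -> (mlen a <= m)%nat).

Definition s_hypoelliptic {d} (s : R) (Q : mpoly d) : Prop :=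
  exists rho Cc A, 0 < rho /\ rho <= 1 /\ rho >= 1 / s /\ Cc > 0 /\ A >= 0 /\
    forall (b : mindex d) (xi : Rd d), vnorm xi >= A ->
      Cnorm (peval (pderiv b Q) xi)
        <= Cc * Cnorm (peval Q xi) * Rpower (1 + vnorm xi) (- rho * INR (mlen b)).

Definition lincomb_coef {d} (r : nat) (a : nat -> Cx) (P : nat -> mpoly d) (b : mindex d) : Cx :=
  sum_upto Cadd r (fun j => Cmul (a j) (pcoef (P j) b)).

Definition basis_of_weaker {d} (r : nat) (P : nat -> mpoly d) : Prop :=
  (forall j, (j <= r)%nat -> weaker (P j) (P O)) /\
  (forall a : nat -> Cx, (forall b, lincomb_coef r a P b = C0) ->
      forall j, (j <= r)%nat -> a j = C0) /\
  (forall Q : mpoly d, weaker Q (P O) ->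
      exists a : nat -> Cx, forall b, pcoef Q b = lincomb_coef r a P b).

Definition maxbound {d} (r : nat) (P : nat -> mpoly d) : nat :=
  sum_upto Nat.max r (fun j => pbound (P j)).

Lemma maxbound_ge {d} (r : nat) (P : nat -> mpoly d) :
  forall j, (j <= r)%nat -> (pbound (P j) <= maxbound r P)%nat.
Proof.
  unfold maxbound. induction r as [|r IH]; intros j Hj; simpl.
  - replace j with O by lia. lia.
  - destruct (Nat.eq_dec j (S r)) as [->|Hne].
    + lia.
    + specialize (IH j ltac:(lia)). lia.
Qed.

Lemma symbol_coef_bound {d} (r : nat) (a : nat -> Cx) (P : nat -> mpoly d) :
  forall b, (exists i, (maxbound r P < b i)%nat) -> lincomb_coef r a P b = C0.
Proof.
  intros b [i Hi]. unfold lincomb_coef.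
  assert (H : forall n, (n <= r)%nat ->
            sum_upto Cadd n (fun j => Cmul (a j) (pcoef (P j) b)) = C0).
  { induction n as [|n IH]; intros Hn; simpl.
    - rewrite (pcoef_bound d (P O) b).
      + unfold Cmul, C0; simpl; f_equal; ring.
      + exists i. pose proof (maxbound_ge r P O ltac:(lia)). lia.
    - rewrite IH by lia. rewrite (pcoef_bound d (P (S n)) b).
      + unfold Cadd, Cmul, C0; simpl; f_equal; ring.
      + exists i. pose proof (maxbound_ge r P (S n) Hn). lia. }
  apply H; lia.
Qed.

Definition symbol {d} (r : nat) (c : nat -> Rd d -> Cx) (P : nat -> mpoly d) (x : Rd d)
  : mpoly d :=
  mkPoly d (lincomb_coef r (fun j => c j x) P) (maxbound r P)
         (symbol_coef_bound r (fun j => c j x) P).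

Definition Ccontinuous {d} (f : Rd d -> Cx) : Prop :=
  forall x eps, eps > 0 -> exists delta, delta > 0 /\
    forall y, vnorm (vsub y x) < delta -> Cnorm (Csub (f y) (f x)) < eps.

Definition bohr_ap {d} (f : Rd d -> Cx) : Prop :=
  Ccontinuous f /\
  forall eps, eps > 0 -> exists L, L > 0 /\
    forall a : Rd d, exists tau : Rd d, vnorm (vsub tau a) <= L /\
      forall x, Cnorm (Csub (f (vadd x tau)) (f x)) <= eps.

(** F b is the partial derivative d^b f; smoothness expressed by the existence
    of the whole family of iterated partial derivatives (real & imaginary parts). *)
Definition partial_family {d} (f : Rd d -> Cx) (F : mindex d -> Rd d -> Cx) : Prop :=
  F mzero = f /\
  forall (b : mindex d) (i : Fin.t d) (x : Rd d),
    derivable_pt_lim (fun t => fst (F b (update x i t))) (x i) (fst (F (madd b (munit i)) x)) /\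
    derivable_pt_lim (fun t => snd (F b (update x i t))) (x i) (snd (F (madd b (munit i)) x)).

Definition G1ap {d} (f : Rd d -> Cx) : Prop :=
  exists F : mindex d -> Rd d -> Cx,
    partial_family f F /\
    (forall b, bohr_ap (F b)) /\
    exists K, K > 0 /\ forall b x, Cnorm (F b x) <= K ^ (1 + mlen b) * mfact b.

Definition constant_strength {d} (p : Rd d -> mpoly d) : Prop :=
  forall x y, equally_strong (p x) (p y).

(* Main.v *)
Require Import Defs.
From Stdlib Require Import Reals.
From Stdlib Require Import Lra Lia Arith.
From Stdlib Require Import Classical FunctionalExtensionality.
From Stdlib Require Fin.
Open Scope R_scope.

Lemma sum_upto_hom {A B} (addA : A->A->A) (addB : B->B->B) (h : A -> B) :
  (forall x y, h (addA x y) = addB (h x) (h y)) ->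
  forall N f, h (sum_upto addA N f) = sum_upto addB N (fun k => h (f k)).
Proof. intros Hh N f; induction N; simpl; [reflexivity| rewrite Hh, IHN; reflexivity]. Qed.

Lemma box_sum_hom {A B} (addA : A->A->A) (addB : B->B->B) (h : A -> B) :
  (forall x y, h (addA x y) = addB (h x) (h y)) ->
  forall d N F, h (box_sum addA d N F) = box_sum addB d N (fun a => h (F a)).
Proof.
  intros Hh d; induction d; intros N F; simpl; [reflexivity|].
  rewrite (sum_upto_hom _ _ _ Hh). f_equal; extensionality k; apply IHd.
Qed.

Lemma sum_upto_ext_le {A} (add:A->A->A) n f g :
  (forall j, (j <= n)%nat -> f j = g j) -> sum_upto add n f = sum_upto add n g.
Proof. induction n; intros H; simpl. apply H; lia.
  rewrite IHn by (intros; apply H; lia). rewrite H by lia. reflexivity. Qed.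

Notation su := (sum_upto Rplus).
Notation bs := (box_sum Rplus).

Lemma su_lin2 n u v f g : su n (fun k => u * f k + v * g k) = u * su n f + v * su n g.
Proof. induction n; simpl; [|rewrite IHn]; ring. Qed.
Lemma su_le n f g : (forall k, f k <= g k) -> su n f <= su n g.
Proof. intros H; induction n; simpl; [apply H| specialize (H (S n)); lra]. Qed.
Lemma su_zero n f : (forall k, f k = 0) -> su n f = 0.
Proof. intros H; induction n; simpl; rewrite ?IHn, H; ring. Qed.
Lemma su_nonneg n f : (forall k, 0 <= f k) -> 0 <= su n f.
Proof. intros H; induction n; simpl; [apply H| specialize (H (S n)); lra]. Qed.
Lemma su_ge_term n f k : (forall k, 0 <= f k) -> (k <= n)%nat -> f k <= su n f.
Proof. intros H; induction n; intros Hk; simpl.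
  - replace k with O by lia; lra.
  - destruct (Nat.eq_dec k (S n)) as [->|Hne].
    + pose proof (su_nonneg n f H); lra.
    + specialize (IHn ltac:(lia)); specialize (H (S n)); lra. Qed.
Lemma su_single n f : (forall k, (0 < k)%nat -> f k = 0) -> su n f = f O.
Proof. intros H; induction n; simpl; [reflexivity|rewrite IHn, (H (S n)) by lia; ring]. Qed.
Lemma su_extend N N' f : (N <= N')%nat -> (forall k, (N < k)%nat -> f k = 0) -> su N' f = su N f.
Proof. intros Hl H; induction N'.
  - replace N with O by lia; reflexivity.
  - destruct (Nat.eq_dec N (S N')) as [->|Hne]; [reflexivity|].
    simpl; rewrite IHN' by lia; rewrite H by lia; ring. Qed.
Lemma su_abs n f : Rabs (su n f) <= su n (fun k => Rabs (f k)).
Proof. induction n; simpl; [lra|]. eapply Rle_trans; [apply Rabs_triang|]. lra. Qed.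

Lemma bs_lin2 d N u v F G : bs d N (fun a => u * F a + v * G a) = u * bs d N F + v * bs d N G.
Proof. revert N F G; induction d; intros; simpl; [reflexivity|].
  rewrite <- su_lin2. f_equal; extensionality k; apply IHd. Qed.
Lemma bs_le d N F G : (forall a, F a <= G a) -> bs d N F <= bs d N G.
Proof. revert N F G; induction d; intros N F G H; simpl; [apply H|].
  apply su_le; intro k; apply IHd; intros; apply H. Qed.
Lemma bs_zero d N F : (forall a, F a = 0) -> bs d N F = 0.
Proof. revert N F; induction d; intros N F H; simpl; [apply H|].
  apply su_zero; intro k; apply IHd; intros; apply H. Qed.
Lemma bs_nonneg d N F : (forall a, 0 <= F a) -> 0 <= bs d N F.
Proof. intros H. rewrite <- (bs_zero d N (fun _ => 0)) by reflexivity. apply bs_le; auto. Qed.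
Lemma bs_abs d N F : Rabs (bs d N F) <= bs d N (fun a => Rabs (F a)).
Proof. revert N F; induction d; intros; simpl; [lra|].
  eapply Rle_trans; [apply su_abs|]. apply su_le; intro; apply IHd. Qed.

Lemma mcons_eta {d} (a : mindex (S d)) : mcons (a Fin.F1) (fun i => a (Fin.FS i)) = a.
Proof. extensionality i. apply (Fin.caseS' i (fun i => mcons _ _ i = a i)); intros; reflexivity. Qed.
Lemma mindex0_eq (a b : mindex 0) : a = b.
Proof. extensionality i. apply (Fin.case0 (fun i => a i = b i)). Qed.

Lemma bs_ge_term d N F a : (forall a, 0 <= F a) -> (forall i, (a i <= N)%nat) -> F a <= bs d N F.
Proof. revert N F a; induction d; intros N F a H Ha; simpl.
  - right; f_equal; apply mindex0_eq.
  - rewrite <- (mcons_eta a) at 1.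
    eapply Rle_trans; [apply (IHd N (fun b => F (mcons (a Fin.F1) b)) (fun i => a (Fin.FS i)))|].
    + intros; apply H.
    + intros; apply Ha.
    + apply (su_ge_term N (fun k => bs d N (fun b => F (mcons k b)))).
      * intros; apply bs_nonneg; intros; apply H.
      * apply Ha. Qed.

Lemma bs_single d N F : (forall a, (exists i, a i <> 0%nat) -> F a = 0) -> bs d N F = F mzero.
Proof. revert N F; induction d; intros N F H; simpl.
  - f_equal; apply mindex0_eq.
  - rewrite su_single.
    + rewrite IHd. f_equal. extensionality i. apply (Fin.caseS' i (fun i => mcons _ _ i = mzero i)); intros; reflexivity.
      intros b [i Hi]. apply H. exists (Fin.FS i). exact Hi.
    + intros k Hk. apply bs_zero. intros b. apply H. exists Fin.F1. simpl. lia. Qed.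

Lemma bs_extend d N N' F : (N <= N')%nat -> (forall a, (exists i, (N < a i)%nat) -> F a = 0) ->
  bs d N' F = bs d N F.
Proof. revert N N' F; induction d; intros N N' F Hl H; simpl; [reflexivity|].
  rewrite (su_extend N N') by (auto; intros k Hk; apply bs_zero; intros b; apply H; exists Fin.F1; simpl; lia).
  f_equal; extensionality k. apply IHd; auto. intros b [i Hi]; apply H; exists (Fin.FS i); exact Hi. Qed.

Lemma bs_exchange d N r F : bs d N (fun a => su r (fun j => F a j)) = su r (fun j => bs d N (fun a => F a j)).
Proof. induction r; simpl; [reflexivity|].
  rewrite <- IHr. transitivity (bs d N (fun a => 1 * su r (fun j => F a j) + 1 * F a (S r))).
  f_equal; extensionality a; ring. rewrite bs_lin2; ring. Qed.

Lemma fin_prod_one d f : (forall i, f i = 1) -> fin_prodR d f = 1.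
Proof. unfold fin_prodR; revert f; induction d; intros f H; simpl; [reflexivity|].
  rewrite H, IHd by (intros; apply H); ring. Qed.
Lemma fin_prod_pos d f : (forall i, 0 < f i) -> 0 < fin_prodR d f.
Proof. unfold fin_prodR; revert f; induction d; intros f H; simpl; [lra|].
  apply Rmult_lt_0_compat; [apply H| apply IHd; intros; apply H]. Qed.
Lemma fin_prod_abs_le d f g : (forall i, Rabs (f i) <= g i) -> Rabs (fin_prodR d f) <= fin_prodR d g.
Proof. unfold fin_prodR; revert f g; induction d; intros f g H; simpl.
  - rewrite Rabs_R1; lra.
  - rewrite Rabs_mult. specialize (IHd (fun i => f (Fin.FS i)) (fun i => g (Fin.FS i)) (fun i => H _)).
    pose proof (H Fin.F1). pose proof (Rabs_pos (f Fin.F1)).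
    pose proof (Rabs_pos (fin_fold Rmult 1 d (fun i => f (Fin.FS i)))).
    apply Rmult_le_compat; lra. Qed.
Lemma fin_sum_nonneg d f : (forall i, 0 <= f i) -> 0 <= fin_sumR d f.
Proof. unfold fin_sumR; revert f; induction d; intros f H; simpl; [lra|].
  pose proof (H Fin.F1). pose proof (IHd (fun i => f (Fin.FS i)) (fun i => H _)); lra. Qed.
Lemma fin_sum_ge_term d f i : (forall i, 0 <= f i) -> f i <= fin_sumR d f.
Proof. unfold fin_sumR; revert f i; induction d; intros f i H.
  - apply (Fin.case0 (fun i => f i <= _) i).
  - apply (Fin.caseS' i (fun i => f i <= fin_fold Rplus 0 (S d) f)); simpl.
    + pose proof (fin_sum_nonneg d (fun i => f (Fin.FS i)) (fun i => H _)). unfold fin_sumR in *.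
      pose proof (H Fin.F1); lra.
    + intros p. pose proof (H Fin.F1). pose proof (IHd (fun i => f (Fin.FS i)) p (fun i => H _)). lra. Qed.

Lemma mlen_madd {d} (a b : mindex d) : mlen (madd a b) = (mlen a + mlen b)%nat.
Proof. unfold mlen, fin_sumN, madd; revert a b; induction d; intros a b; simpl; [reflexivity|].
  rewrite (IHd (fun i => a (Fin.FS i)) (fun i => b (Fin.FS i))). lia. Qed.
Lemma mlen_ge_term {d} (a : mindex d) i : (a i <= mlen a)%nat.
Proof. unfold mlen, fin_sumN; revert a i; induction d; intros a i.
  - apply (Fin.case0 (fun i => _) i).
  - apply (Fin.caseS' i (fun i => (a i <= _)%nat)); simpl; [lia|].
    intros p; pose proof (IHd (fun i => a (Fin.FS i)) p); simpl in *; lia. Qed.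
Lemma mlen_bound {d} (a : mindex d) N : (forall i, (a i <= N)%nat) -> (mlen a <= d * N)%nat.
Proof. unfold mlen, fin_sumN; revert a; induction d; intros a H; simpl; [lia|].
  pose proof (H Fin.F1). pose proof (IHd (fun i => a (Fin.FS i)) (fun i => H _)). lia. Qed.

Lemma Cnorm_nonneg z : 0 <= Cnorm z.
Proof. apply sqrt_pos. Qed.
Lemma Cnorm_C0 : Cnorm C0 = 0.
Proof. unfold Cnorm, C0; simpl. replace (0*(0*1)+0*(0*1)) with 0 by ring. apply sqrt_0. Qed.
Lemma Cnorm_pos z : z <> C0 -> 0 < Cnorm z.
Proof. intros Hz. destruct (Rle_lt_or_eq_dec _ _ (Cnorm_nonneg z)) as [h|h]; auto.
  exfalso. apply Hz. unfold Cnorm in h. symmetry in h. apply sqrt_eq_0 in h; [|nra].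
  destruct z as [x y]; unfold C0; simpl in *. f_equal; nra. Qed.
Lemma Cnorm_le_abs z : Cnorm z <= Rabs (fst z) + Rabs (snd z).
Proof. unfold Cnorm. pose proof (Rabs_pos (fst z)); pose proof (Rabs_pos (snd z)).
  rewrite <- (sqrt_pow2 (Rabs (fst z) + Rabs (snd z))) by lra. apply sqrt_le_1_alt.
  rewrite <- (pow2_abs (fst z)), <- (pow2_abs (snd z)). nra. Qed.
Lemma Cnorm_triangle a b : Cnorm (Cadd a b) <= Cnorm a + Cnorm b.
Proof. destruct a as [a1 a2], b as [b1 b2]; unfold Cnorm, Cadd; cbn [fst snd].
  set (sa := sqrt (a1 ^ 2 + a2 ^ 2)). set (sb := sqrt (b1 ^ 2 + b2 ^ 2)).
  assert (Ha : sa * sa = a1^2+a2^2) by (apply sqrt_sqrt; nra).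
  assert (Hb : sb * sb = b1^2+b2^2) by (apply sqrt_sqrt; nra).
  assert (0 <= sa) by apply sqrt_pos. assert (0 <= sb) by apply sqrt_pos.
  assert (Hu : a1*b1+a2*b2 <= sa*sb).
  { destruct (Rle_or_lt (a1*b1+a2*b2) (sa*sb)) as [h|h]; auto. exfalso.
    assert (0 <= sa*sb) by nra.
    assert ((sa*sb)*(sa*sb) < (a1*b1+a2*b2)*(a1*b1+a2*b2)) by nra.
    assert ((sa*sb)*(sa*sb) = (a1*b1+a2*b2)^2 + (a1*b2-a2*b1)^2).
    { replace ((sa*sb)*(sa*sb)) with ((sa*sa)*(sb*sb)) by ring. rewrite Ha, Hb. ring. }
    pose proof (pow2_ge_0 (a1*b2-a2*b1)). replace ((a1*b1+a2*b2)^2) with ((a1*b1+a2*b2)*(a1*b1+a2*b2)) in * by ring. lra. }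
  rewrite <- (sqrt_pow2 (sa + sb)) by lra. apply sqrt_le_1_alt.
  replace ((sa+sb)^2) with (sa*sa + sb*sb + 2*(sa*sb)) by ring. rewrite Ha, Hb. nra. Qed.
Lemma Cnorm_mul a b : Cnorm (Cmul a b) = Cnorm a * Cnorm b.
Proof. destruct a as [a1 a2], b as [b1 b2]; unfold Cnorm, Cmul; simpl.
  rewrite <- sqrt_mult by nra. f_equal; ring. Qed.
Lemma Cnorm_scale t z : Cnorm (Cscale t z) = Rabs t * Cnorm z.
Proof. destruct z as [z1 z2]; unfold Cnorm, Cscale; simpl.
  rewrite <- sqrt_Rsqr_abs, <- sqrt_mult by (unfold Rsqr; nra). f_equal; unfold Rsqr; ring. Qed.
Lemma Cnorm_sum n f : Cnorm (sum_upto Cadd n f) <= su n (fun j => Cnorm (f j)).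
Proof. induction n; simpl; [lra|]. eapply Rle_trans; [apply Cnorm_triangle|]. lra. Qed.

Lemma cbs_fst d N F : fst (box_sum Cadd d N F) = bs d N (fun a => fst (F a)).
Proof. apply (box_sum_hom Cadd Rplus fst). reflexivity. Qed.
Lemma cbs_snd d N F : snd (box_sum Cadd d N F) = bs d N (fun a => snd (F a)).
Proof. apply (box_sum_hom Cadd Rplus snd). reflexivity. Qed.
Lemma csu_fst n f : fst (sum_upto Cadd n f) = su n (fun a => fst (f a)).
Proof. apply (sum_upto_hom Cadd Rplus fst). reflexivity. Qed.
Lemma csu_snd n f : snd (sum_upto Cadd n f) = su n (fun a => snd (f a)).
Proof. apply (sum_upto_hom Cadd Rplus snd). reflexivity. Qed.

Lemma cbs_zero d N F : (forall a, F a = C0) -> box_sum Cadd d N F = C0.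
Proof. intros H. apply injective_projections; rewrite ?cbs_fst, ?cbs_snd; simpl;
  apply bs_zero; intros a; rewrite H; reflexivity. Qed.
Lemma cbs_single d N F : (forall a, (exists i, a i <> 0%nat) -> F a = C0) -> box_sum Cadd d N F = F mzero.
Proof. intros H. apply injective_projections; rewrite ?cbs_fst, ?cbs_snd;
  apply bs_single; intros a Ha; rewrite H; auto. Qed.
Lemma cbs_extend d N N' F : (N <= N')%nat -> (forall a, (exists i, (N < a i)%nat) -> F a = C0) ->
  box_sum Cadd d N' F = box_sum Cadd d N F.
Proof. intros Hl H. apply injective_projections; rewrite ?cbs_fst, ?cbs_snd;
  apply bs_extend; auto; intros a Ha; rewrite H; auto. Qed.
Lemma cbs_mul d N c F : box_sum Cadd d N (fun b => Cmul c (F b)) = Cmul c (box_sum Cadd d N F).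
Proof. apply injective_projections; unfold Cmul at 2; simpl; rewrite ?cbs_fst, ?cbs_snd.
  - transitivity (bs d N (fun b => fst c * fst (F b) + (- snd c) * snd (F b))).
    f_equal; extensionality b; simpl; ring. rewrite bs_lin2; ring.
  - transitivity (bs d N (fun b => fst c * snd (F b) + snd c * fst (F b))).
    f_equal; extensionality b; simpl; ring. rewrite bs_lin2; ring. Qed.
Lemma cbs_exchange d N r F : box_sum Cadd d N (fun a => sum_upto Cadd r (fun j => F a j)) =
  sum_upto Cadd r (fun j => box_sum Cadd d N (fun a => F a j)).
Proof. apply injective_projections.
  - rewrite cbs_fst, csu_fst.
    transitivity (bs d N (fun a => su r (fun j => fst (F a j)))).
    { f_equal; extensionality a. apply csu_fst. }
    rewrite bs_exchange. f_equal; extensionality j. symmetry; apply cbs_fst.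
  - rewrite cbs_snd, csu_snd.
    transitivity (bs d N (fun a => su r (fun j => snd (F a j)))).
    { f_equal; extensionality a. apply csu_snd. }
    rewrite bs_exchange. f_equal; extensionality j. symmetry; apply cbs_snd.
Qed.
Lemma Cscale_sum k n f : Cscale k (sum_upto Cadd n f) = sum_upto Cadd n (fun j => Cscale k (f j)).
Proof. induction n; simpl; [reflexivity|]. rewrite <- IHn. unfold Cscale, Cadd; simpl; f_equal; ring. Qed.

Lemma Cscale_C0 t : Cscale t C0 = C0.
Proof. unfold Cscale, C0; simpl; f_equal; ring. Qed.

Lemma bs_plus d N F G : bs d N (fun a => F a + G a) = bs d N F + bs d N G.
Proof. transitivity (bs d N (fun a => 1 * F a + 1 * G a)). f_equal; extensionality a; ring.
  rewrite bs_lin2; ring. Qed.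

Section P.
Context {d : nat}.

Lemma pderiv_zero_out (Q : mpoly d) a xi : (exists i, (pbound Q < a i)%nat) -> peval (pderiv a Q) xi = C0.
Proof. intros [i Hi]. unfold peval. apply cbs_zero. intros b. simpl. unfold pderiv_coef.
  rewrite (pcoef_bound d Q (madd a b)); [rewrite !Cscale_C0; reflexivity|].
  exists i; unfold madd; lia. Qed.

Lemma ptilde_ge (Q : mpoly d) a xi : Cnorm (peval (pderiv a Q) xi) <= ptilde Q xi.
Proof. destruct (classic (exists i, (pbound Q < a i)%nat)) as [H|H].
  - rewrite pderiv_zero_out by auto. rewrite Cnorm_C0. apply sqrt_pos.
  - unfold ptilde. rewrite <- (sqrt_pow2 (Cnorm _)) by apply Cnorm_nonneg.
    apply sqrt_le_1_alt.
    apply (bs_ge_term d (pbound Q) (fun a => Cnorm (peval (pderiv a Q) xi) ^ 2) a).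
    + intros; apply pow2_ge_0.
    + intros i. destruct (le_lt_dec (a i) (pbound Q)); auto. exfalso; apply H; eauto. Qed.

Lemma ptilde_le (Q : mpoly d) xi G : (forall a, Cnorm (peval (pderiv a Q) xi) <= G a) ->
  ptilde Q xi <= sqrt (bs d (pbound Q) (fun a => G a ^ 2)).
Proof. intros H. apply sqrt_le_1_alt. apply bs_le. intros a. apply pow_incr.
  split; [apply Cnorm_nonneg| apply H]. Qed.

Lemma ptilde_le_const (Q : mpoly d) xi g : (forall a, Cnorm (peval (pderiv a Q) xi) <= g) ->
  ptilde Q xi <= sqrt (bs d (pbound Q) (fun _ => 1)) * g.
Proof. intros H. assert (0 <= g) by (eapply Rle_trans; [apply Cnorm_nonneg|apply (H mzero)]).
  eapply Rle_trans; [apply (ptilde_le Q xi (fun _ => g)); auto|].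
  replace (bs d (pbound Q) (fun _ => g ^ 2)) with (bs d (pbound Q) (fun _ => 1) * g ^ 2).
  - rewrite sqrt_mult, sqrt_pow2; auto. lra. apply bs_nonneg; intros; lra. apply pow2_ge_0.
  - transitivity (bs d (pbound Q) (fun _ => g^2 * 1 + 0 * 0)).
    rewrite bs_lin2; ring. f_equal; extensionality a; ring. Qed.

Lemma peval_deriv0 (Q : mpoly d) xi : peval (pderiv mzero Q) xi = peval Q xi.
Proof. unfold peval; simpl. f_equal; extensionality b. unfold pderiv_coef.
  rewrite fin_prod_one.
  - change (madd mzero b) with b. destruct (pcoef Q b); unfold Cscale; simpl; f_equal; f_equal; ring.
  - intros i. unfold mzero; simpl. field. apply not_0_INR, fact_neq_0. Qed.

Lemma coef_inbox (Q : mpoly d) a : pcoef Q a <> C0 -> forall i, (a i <= pbound Q)%nat.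
Proof. intros H i. destruct (le_lt_dec (a i) (pbound Q)); auto. exfalso; apply H.
  apply pcoef_bound; eauto. Qed.

Lemma maxcoef (Q : mpoly d) : (exists a, pcoef Q a <> C0) ->
  exists a, pcoef Q a <> C0 /\ forall b, (mlen a < mlen b)%nat -> pcoef Q b = C0.
Proof. intros [a0 H0]. apply NNPP; intros Hn.
  assert (forall k, exists a, pcoef Q a <> C0 /\ (k <= mlen a)%nat).
  { induction k. exists a0; split; auto; lia.
    destruct IHk as [a [Ha Hk]].
    assert (~ (forall b, (mlen a < mlen b)%nat -> pcoef Q b = C0)) by (intros Hb; apply Hn; eauto).
    apply not_all_ex_not in H. destruct H as [b Hb]. apply imply_to_and in Hb. destruct Hb as [Hb1 Hb2].
    exists b; split; auto; lia. }
  destruct (H (S (d * pbound Q))) as [a [Ha Hk]].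
  pose proof (mlen_bound a (pbound Q) (coef_inbox Q a Ha)). lia. Qed.

Lemma maxderiv (Q : mpoly d) : (exists a, pcoef Q a <> C0) ->
  exists a dl, dl > 0 /\ forall xi, Cnorm (peval (pderiv a Q) xi) = dl.
Proof. intros H. destruct (maxcoef Q H) as [a [Ha Hmax]].
  set (t := fin_prodR d (fun i => INR (fact (a i + mzero i)) / INR (fact (mzero i)))).
  assert (Ht : 0 < t) by (apply fin_prod_pos; intros i; apply Rdiv_lt_0_compat; apply lt_0_INR, lt_O_fact).
  exists a, (t * Cnorm (pcoef Q a)). split.
  { pose proof (Cnorm_pos _ Ha). apply Rmult_lt_0_compat; auto. }
  intros xi. unfold peval. simpl. rewrite cbs_single.
  - unfold pderiv_coef. replace (madd a mzero) with a by (extensionality i; unfold madd, mzero; lia).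
    replace (mono xi mzero) with 1 by (symmetry; apply fin_prod_one; reflexivity). rewrite !Cnorm_scale. fold t.
    rewrite Rabs_R1, Rabs_pos_eq by lra. ring.
  - intros b [i Hi]. unfold pderiv_coef. rewrite Hmax; [rewrite !Cscale_C0; reflexivity|].
    rewrite mlen_madd. pose proof (mlen_ge_term b i). lia. Qed.

Lemma peval_bound (w : mindex d -> Cx) N xi R0 : (forall i, Rabs (xi i) <= R0) ->
  Cnorm (box_sum Cadd d N (fun b => Cscale (mono xi b) (w b))) <=
  bs d N (fun b => mono (fun _ => R0) b * (Rabs (fst (w b)) + Rabs (snd (w b)))).
Proof. intros H. eapply Rle_trans; [apply Cnorm_le_abs|]. rewrite cbs_fst, cbs_snd.
  assert (Hm : forall b, Rabs (mono xi b) <= mono (fun _ => R0) b).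
  { intros b. apply fin_prod_abs_le. intros i. rewrite <- RPow_abs. apply pow_incr.
    split; [apply Rabs_pos| apply H]. }
  eapply Rle_trans; [apply Rplus_le_compat; apply bs_abs|].
  rewrite <- bs_plus. apply bs_le. intros b; simpl. rewrite !Rabs_mult.
  pose proof (Hm b). pose proof (Rabs_pos (mono xi b)). pose proof (Rabs_pos (fst (w b))). pose proof (Rabs_pos (snd (w b))).
  nra. Qed.

Lemma abs_le_vnorm (xi : Rd d) i : Rabs (xi i) <= vnorm xi.
Proof. unfold vnorm. rewrite <- (sqrt_pow2 (Rabs (xi i))) by apply Rabs_pos. apply sqrt_le_1_alt.
  rewrite pow2_abs.
  apply (fin_sum_ge_term d (fun i => xi i ^ 2) i). intros; apply pow2_ge_0. Qed.

End P.

Lemma lin {d} r (c : nat -> Rd d -> Cx) (P : nat -> mpoly d) x a xi :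
  peval (pderiv a (symbol r c P x)) xi =
  sum_upto Cadd r (fun j => Cmul (c j x) (peval (pderiv a (P j)) xi)).
Proof.
  rewrite (sum_upto_ext_le Cadd r _ (fun j => box_sum Cadd d (maxbound r P)
     (fun b => Cmul (c j x) (Cscale (mono xi b) (pderiv_coef a (P j) b))))).
  - rewrite <- cbs_exchange. unfold peval. simpl. f_equal; extensionality b.
    unfold pderiv_coef. simpl. unfold lincomb_coef. rewrite !Cscale_sum.
    apply sum_upto_ext_le; intros j _. unfold Cmul, Cscale; simpl; f_equal; ring.
  - intros j Hj. rewrite cbs_mul. f_equal. unfold peval; simpl.
    symmetry; apply cbs_extend; [apply maxbound_ge; auto|].
    intros b Hb. rewrite pderiv_coef_bound by auto. apply Cscale_C0.
Qed.

Lemma W1 {d} r (c : nat -> Rd d -> Cx) (P : nat -> mpoly d) :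
  basis_of_weaker r P -> forall x, weaker (symbol r c P x) (P O).
Proof.
  intros [Hw _] x.
  assert (Hj : forall n, (n <= r)%nat -> exists K, 0 <= K /\ forall a xi,
     su n (fun j => Cnorm (c j x) * Cnorm (peval (pderiv a (P j)) xi)) <= K * ptilde (P O) xi).
  { induction n; intros Hn.
    - destruct (Hw O Hn) as [K0 [HK0 H0]]. exists (Cnorm (c O x) * K0). split.
      + pose proof (Cnorm_nonneg (c O x)); nra.
      + intros a xi; simpl. rewrite Rmult_assoc. apply Rmult_le_compat_l; [apply Cnorm_nonneg|].
        eapply Rle_trans; [apply ptilde_ge| apply H0].
    - destruct (IHn ltac:(lia)) as [K [HK H]].
      destruct (Hw (S n) Hn) as [K0 [HK0 H0]]. exists (K + Cnorm (c (S n) x) * K0). split.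
      + pose proof (Cnorm_nonneg (c (S n) x)); nra.
      + intros a xi; simpl. rewrite Rmult_plus_distr_r. apply Rplus_le_compat; [apply H|].
        rewrite Rmult_assoc. apply Rmult_le_compat_l; [apply Cnorm_nonneg|].
        eapply Rle_trans; [apply ptilde_ge| apply H0]. }
  destruct (Hj r (le_n r)) as [K [HK H]].
  set (S0 := sqrt (bs d (pbound (symbol r c P x)) (fun _ => 1))).
  assert (0 <= S0) by apply sqrt_pos.
  exists (S0 * K + 1). split; [nra|]. intros xi.
  assert (0 <= ptilde (P O) xi) by apply sqrt_pos.
  eapply Rle_trans; [apply (ptilde_le_const _ xi (K * ptilde (P O) xi))|].
  - intros a. rewrite lin. eapply Rle_trans; [apply Cnorm_sum|].
    eapply Rle_trans; [|apply (H a xi)]. right. f_equal; extensionality j. apply Cnorm_mul.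
  - fold S0. nra.
Qed.

Lemma W2 {d'} s r (c : nat -> Rd (S d') -> Cx) (P : nat -> mpoly (S d')) :
  s_hypoelliptic s (P O) -> (exists a, pcoef (P O) a <> C0) ->
  (exists eps A, eps > 0 /\ A >= 0 /\
     forall (xi x : Rd (S d')), vnorm xi >= A ->
       Cnorm (peval (symbol r c P x) xi) >= eps * Cnorm (peval (P O) xi)) ->
  forall x, weaker (P O) (symbol r c P x).
Proof.
  intros [rho [Cc [Ah [Hr1 [Hr2 [Hr3 [HCc [HAh Hhyp]]]]]]]] HP0 [eps [Ae [Heps [HAe Hlow]]]] x.
  set (Q := symbol r c P x).
  set (A' := Rmax Ah Ae).
  assert (HA'0 : 0 <= A') by (unfold A'; pose proof (Rmax_l Ah Ae); lra).
  assert (Hbig : forall xi, vnorm xi >= A' -> forall a,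
     Cnorm (peval (pderiv a (P O)) xi) <= Cc * Cnorm (peval (P O) xi)).
  { intros xi Hv a. assert (vnorm xi >= Ah) by (pose proof (Rmax_l Ah Ae); fold A' in H; lra).
    eapply Rle_trans; [apply Hhyp; auto|].
    assert (0 <= vnorm xi) by apply sqrt_pos.
    assert (Rpower (1 + vnorm xi) (- rho * INR (mlen a)) <= 1).
    { rewrite <- (Rpower_O (1 + vnorm xi)) at 2 by lra. apply Rle_Rpower; [lra|].
      pose proof (pos_INR (mlen a)). nra. }
    pose proof (Cnorm_nonneg (peval (P O) xi)). rewrite <- (Rmult_1_r (Cc * _)) at 2. apply Rmult_le_compat_l; [nra|lra]. }
  assert (HQ : exists a, pcoef Q a <> C0).
  { apply NNPP; intro Hn. destruct (maxderiv (P O) HP0) as [a0 [dl0 [Hdl0 Hd0]]].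
    set (xi0 := fun _ : Fin.t (S d') => A').
    assert (Hv : vnorm xi0 >= A').
    { pose proof (abs_le_vnorm xi0 Fin.F1). unfold xi0 in H at 1. rewrite Rabs_pos_eq in H; lra. }
    assert (HQ0 : peval Q xi0 = C0).
    { unfold peval; apply cbs_zero; intros b.
      assert (pcoef Q b = C0) by (apply NNPP; intro; apply Hn; eauto).
      rewrite H; apply Cscale_C0. }
    assert (vnorm xi0 >= Ae) by (pose proof (Rmax_r Ah Ae); fold A' in H; lra).
    pose proof (Hlow xi0 x H). fold Q in H0. rewrite HQ0, Cnorm_C0 in H0.
    pose proof (Cnorm_nonneg (peval (P O) xi0)).
    assert (Cnorm (peval (P O) xi0) = 0) by nra.
    pose proof (Hbig xi0 Hv a0). rewrite Hd0, H2 in H3. lra. }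
  destruct (maxderiv Q HQ) as [aq [dq [Hdq HdQ]]].
  assert (HptQ : forall xi, dq <= ptilde Q xi) by (intros; rewrite <- (HdQ xi); apply ptilde_ge).
  set (G := fun a => bs (S d') (pbound (P O)) (fun b => mono (fun _ => A') b *
        (Rabs (fst (pderiv_coef a (P O) b)) + Rabs (snd (pderiv_coef a (P O) b))))).
  set (Mb := sqrt (bs (S d') (pbound (P O)) (fun a => G a ^ 2))).
  assert (HMb : 0 <= Mb) by apply sqrt_pos.
  set (S0 := sqrt (bs (S d') (pbound (P O)) (fun _ => 1))).
  assert (HS0 : 0 <= S0) by apply sqrt_pos.
  exists (S0 * Cc / eps + Mb / dq + 1). split.
  { assert (0 <= S0 * Cc / eps) by (unfold Rdiv; apply Rmult_le_pos; [nra| left; apply Rinv_0_lt_compat; lra]).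
    assert (0 <= Mb / dq) by (unfold Rdiv; apply Rmult_le_pos; [lra| left; apply Rinv_0_lt_compat; lra]).
    lra. }
  intros xi. pose proof (HptQ xi) as HT.
  assert (0 <= S0 * Cc / eps) by (unfold Rdiv; apply Rmult_le_pos; [nra| left; apply Rinv_0_lt_compat; lra]).
  assert (0 <= Mb / dq) by (unfold Rdiv; apply Rmult_le_pos; [lra| left; apply Rinv_0_lt_compat; lra]).
  destruct (Rle_or_lt A' (vnorm xi)) as [Hv|Hv].
  - assert (H1 : ptilde (P O) xi <= S0 * (Cc * Cnorm (peval (P O) xi))).
    { apply ptilde_le_const. apply Hbig; lra. }
    assert (H2 : eps * Cnorm (peval (P O) xi) <= ptilde Q xi).
    { assert (vnorm xi >= Ae) by (pose proof (Rmax_r Ah Ae) as Hm; fold A' in Hm; lra).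
      pose proof (Hlow xi x H2) as Hl. fold Q in Hl.
      pose proof (ptilde_ge Q mzero xi) as Hg. rewrite peval_deriv0 in Hg. lra. }
    assert (H3 : S0 * (Cc * Cnorm (peval (P O) xi)) <= S0 * Cc / eps * ptilde Q xi).
    { replace (S0 * Cc / eps * ptilde Q xi) with (S0 * Cc * (/ eps * ptilde Q xi)) by (unfold Rdiv; ring).
      rewrite <- Rmult_assoc. apply Rmult_le_compat_l; [nra|].
      apply (Rmult_le_reg_l eps); [lra|]. rewrite <- Rmult_assoc, Rinv_r by lra. lra. }
    nra.
  - assert (H1 : ptilde (P O) xi <= Mb).
    { apply ptilde_le. intros a. unfold G.
      apply (peval_bound (fun b => pderiv_coef a (P O) b) (pbound (P O)) xi A').
      intros i; pose proof (abs_le_vnorm xi i); lra. }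
    assert (H2 : Mb <= Mb / dq * ptilde Q xi).
    { replace Mb with (Mb / dq * dq) at 1 by (field; lra). apply Rmult_le_compat_l; lra. }
    nra.
Qed.

Lemma weaker_trans {d} (A B C : mpoly d) : weaker A B -> weaker B C -> weaker A C.
Proof. intros [K1 [H1 F1]] [K2 [H2 F2]]. exists (K1 * K2). split; [nra|].
  intros xi. eapply Rle_trans; [apply F1|]. rewrite Rmult_assoc. apply Rmult_le_compat_l; [lra|apply F2]. Qed.

Theorem mainTheorem14 (d : nat) (s : R) (m r : nat)
  (P : nat -> mpoly d) (c : nat -> Rd d -> Cx) :
  s >= 1 ->
  s_hypoelliptic s (P O) ->
  poly_order (P O) m ->
  basis_of_weaker r P ->
  (forall j, (j <= r)%nat -> G1ap (c j)) ->
  (exists eps A, eps > 0 /\ A >= 0 /\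
     forall (xi x : Rd d), vnorm xi >= A ->
       Cnorm (peval (symbol r c P x) xi) >= eps * Cnorm (peval (P O) xi)) ->
  constant_strength (symbol r c P).
Proof.
  intros Hs Hhyp Hord Hbasis HG Hlow x y.
  destruct d as [|d'].
  - assert (x = y) by (extensionality i; apply (Fin.case0 (fun i => x i = y i))). subst.
    split; exists 1; split; [lra| intros; lra | lra | intros; lra].
  - assert (HP0 : exists a, pcoef (P O) a <> C0) by (destruct Hord as [[a [_ Ha]] _]; eauto).
    split; eapply weaker_trans;
      [apply W1; auto | apply (W2 s); auto | apply W1; auto | apply (W2 s); auto].
Qed.
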